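(* Every LCS-complete space is completely Baire, i.e. every closed subspace of it is a Baire space. In particular every LCS-complete space is Baire.
   Context: A Baire space is a space in which every intersection of countably many dense open subsets is dense. A space is LCS-complete if it is homeomorphic to a $G_\delta$ subset (countable intersection of open sets), with the subspace topology, of some locally compact sober space, locally compact meaning every point has a neighborhood base of compact saturated sets. *)

(* Defs.v *)
From Stdlib Require Import List.

Set Implicit Arguments.

Definition topology (X : Type) := (X -> Prop) -> Prop.

Definition is_topology (X : Type) (T : topology X) : Prop :=
  T (fun _ => True) /\
  (forall U V, T U -> T V -> T (fun x => U x /\ V x)) /\
  (forall F : (X -> Prop) -> Prop, (forall U, F U -> T U) ->
     T (fun x => exists U, F U /\ U x)).

Definition closed (X : Type) (T : topology X) (C : X -> Prop) : Prop :=
  T (fun x => ~ C x).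

Definition subspace (X : Type) (T : topology X) (A : X -> Prop) : topology {x | A x} :=
  fun V => exists W, T W /\ forall z : {x | A x}, V z <-> W (proj1_sig z).

Definition dense (X : Type) (T : topology X) (D : X -> Prop) : Prop :=
  forall U, T U -> (exists x, U x) -> exists x, U x /\ D x.

Definition Baire (X : Type) (T : topology X) : Prop :=
  forall U : nat -> X -> Prop,
    (forall n, T (U n) /\ dense T (U n)) ->
    dense T (fun x => forall n, U n x).

Definition completely_Baire (X : Type) (T : topology X) : Prop :=
  forall C : X -> Prop, closed T C -> Baire (subspace T C).

Definition compact (X : Type) (T : topology X) (K : X -> Prop) : Prop :=
  forall F : (X -> Prop) -> Prop,
    (forall U, F U -> T U) ->
    (forall x, K x -> exists U, F U /\ U x) ->
    exists l : list (X -> Prop),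
      (forall U, In U l -> F U) /\ (forall x, K x -> exists U, In U l /\ U x).

Definition saturated (X : Type) (T : topology X) (Q : X -> Prop) : Prop :=
  forall x, (forall U, T U -> (forall y, Q y -> U y) -> U x) -> Q x.

Definition locally_compact (X : Type) (T : topology X) : Prop :=
  forall x U, T U -> U x ->
    exists Q : X -> Prop,
      compact T Q /\ saturated T Q /\
      (exists V, T V /\ V x /\ forall y, V y -> Q y) /\
      (forall y, Q y -> U y).

Definition closure1 (X : Type) (T : topology X) (x : X) : X -> Prop :=
  fun y => forall U, T U -> U y -> U x.

Definition irreducible_closed (X : Type) (T : topology X) (F : X -> Prop) : Prop :=
  closed T F /\ (exists x, F x) /\
  forall F1 F2, closed T F1 -> closed T F2 ->
    (forall x, F x -> F1 x \/ F2 x) ->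
    (forall x, F x -> F1 x) \/ (forall x, F x -> F2 x).

Definition sober (X : Type) (T : topology X) : Prop :=
  forall F, irreducible_closed T F ->
    exists! x, forall y, F y <-> closure1 T x y.

Definition G_delta (X : Type) (T : topology X) (A : X -> Prop) : Prop :=
  exists U : nat -> X -> Prop, (forall n, T (U n)) /\
    forall x, A x <-> (forall n, U n x).

Definition homeomorphic (X Y : Type) (TX : topology X) (TY : topology Y) : Prop :=
  exists (f : X -> Y) (g : Y -> X),
    (forall x, g (f x) = x) /\ (forall y, f (g y) = y) /\
    (forall W, TY W -> TX (fun x => W (f x))) /\
    (forall V, TX V -> TY (fun y => V (g y))).

Definition LCS_complete (X : Type) (T : topology X) : Prop :=
  exists (Y : Type) (TY : topology Y) (A : Y -> Prop),
    is_topology TY /\ locally_compact TY /\ sober TY /\ G_delta TY A /\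
    homeomorphic T (subspace TY A).

(* Main.v *)
Require Import Defs.
From Stdlib Require Import List Classical FunctionalExtensionality PropExtensionality ClassicalEpsilon Lia Arith.

Definition sub {Y} (A B : Y -> Prop) := forall y, A y -> B y.
Definition chain {Y} (C : (Y->Prop) -> Prop) := forall A B, C A -> C B -> sub A B \/ sub B A.
Definition bigU {Y} (C : (Y->Prop)->Prop) : Y -> Prop := fun y => exists A, C A /\ A y.
Definition towerP {Y} (a0 : Y->Prop) (g : (Y->Prop)->(Y->Prop)) (T : (Y->Prop)->Prop) :=
  T a0 /\ (forall A, T A -> T (g A)) /\
  (forall C, (forall A, C A -> T A) -> chain C -> (exists A, C A) -> T (bigU C)).
Definition Mset {Y} a0 g (A : Y -> Prop) := forall T, towerP a0 g T -> T A.

Lemma set_ext {Y} (A B : Y -> Prop) : (forall y, A y <-> B y) -> A = B.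
Proof. intros H; apply functional_extensionality; intro y; apply propositional_extensionality; auto. Qed.

Lemma open_ext {Y} (T : topology Y) A B : T A -> (forall y, A y <-> B y) -> T B.
Proof. intros HA H; rewrite <- (set_ext A B H); exact HA. Qed.

Lemma M_tower {Y} (a0 : Y->Prop) g : towerP a0 g (Mset a0 g).
Proof.
  split; [|split].
  - intros T HT; apply HT.
  - intros A HA T HT. destruct HT as [H1 [H2 H3]]. apply H2. apply HA; split; auto.
  - intros C HC Hch Hne T HT. destruct HT as [H1 [H2 H3]]. apply H3; auto.
    intros A HA; apply HC; auto. split; auto.
Qed.

Lemma M_ind {Y} (a0 : Y->Prop) g (P : (Y->Prop)->Prop) :
  towerP a0 g (fun A => Mset a0 g A /\ P A) -> forall A, Mset a0 g A -> P A.
Proof. intros HT A HA. apply (HA _ HT). Qed.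

Lemma M_a0 {Y} (a0 : Y->Prop) g : (forall A, sub A (g A)) -> forall A, Mset a0 g A -> sub a0 A.
Proof.
  intros gsub. apply M_ind. destruct (M_tower a0 g) as [T1 [T2 T3]].
  split; [|split].
  - split; [exact T1| intros y h; exact h].
  - intros A [HA HP]. split; [auto|]. intros y h; apply gsub; auto.
  - intros C HC Hch [A0 HA0]. split.
    + apply T3; eauto. intros A HA; apply (HC A HA).
    + intros y h. exists A0. split; auto. apply (HC A0 HA0); auto.
Qed.

Definition extreme {Y} a0 g (c : Y -> Prop) :=
  forall x, Mset a0 g x -> sub x c -> ~ sub c x -> sub (g x) c.

Lemma lemma1 {Y} (a0 : Y->Prop) g : (forall A, sub A (g A)) ->
  forall c, Mset a0 g c -> extreme a0 g c -> forall x, Mset a0 g x -> sub x c \/ sub (g c) x.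
Proof.
  intros gsub c Mc Ec. apply M_ind. destruct (M_tower a0 g) as [T1 [T2 T3]].
  split; [|split].
  - split; auto. left. apply (M_a0 a0 g gsub c Mc).
  - intros x [Mx [Hxc | Hgx]]; split; auto.
    + destruct (classic (sub c x)) as [Hcx | Hncx].
      * assert (x = c) by (apply set_ext; intro y; split; [apply Hxc|apply Hcx]).
        subst x. right. intros y h; exact h.
      * left. apply Ec; auto.
    + right. intros y h. apply gsub. apply Hgx; auto.
  - intros C HC Hch Hne. split.
    + apply T3; auto. intros A HA; apply (HC A HA).
    + destruct (classic (exists A, C A /\ sub (g c) A)) as [[A [HA Hs]] | Hn].
      * right. intros y h. exists A. split; auto.
      * left. intros y [A [HA Ay]]. destruct (proj2 (HC A HA)) as [H|H].
        -- apply H; auto.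
        -- exfalso; apply Hn; exists A; auto.
Qed.

Lemma lemma2 {Y} (a0 : Y->Prop) g : (forall A, sub A (g A)) ->
  forall c, Mset a0 g c -> extreme a0 g c.
Proof.
  intros gsub. apply M_ind. destruct (M_tower a0 g) as [T1 [T2 T3]].
  split; [|split].
  - split; auto. intros x Mx Hx Hn. exfalso. apply Hn. apply (M_a0 a0 g gsub x Mx).
  - intros c [Mc Ec]. split; auto.
    intros x Mx Hxc Hn.
    destruct (lemma1 a0 g gsub c Mc Ec x Mx) as [H|H]; [|exfalso; apply Hn; exact H].
    destruct (classic (sub c x)) as [Hcx|Hncx].
    + assert (x = c) by (apply set_ext; intro y; split; [apply H|apply Hcx]). subst x.
      intros y h; exact h.
    + intros y h. apply gsub. apply (Ec x Mx H Hncx); auto.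
  - intros C HC Hch Hne. split.
    + apply T3; auto. intros A HA; apply (HC A HA).
    + intros x Mx Hxu Hn.
      destruct (classic (exists c, C c /\ ~ sub (g c) x)) as [[c [Cc Hc]] | Hall].
      * destruct (HC c Cc) as [Mc Ec].
        destruct (lemma1 a0 g gsub c Mc Ec x Mx) as [Hxc|Hgx]; [|contradiction].
        destruct (classic (sub c x)) as [Hcx|Hncx].
        -- assert (x = c) by (apply set_ext; intro y; split; [apply Hxc|apply Hcx]). subst x.
           destruct (classic (exists c', C c' /\ ~ sub c' c)) as [[c' [Cc' Hc']] | Hn2].
           ++ destruct (HC c' Cc') as [Mc' _].
              destruct (lemma1 a0 g gsub c Mc Ec c' Mc') as [H|H]; [contradiction|].
              intros y h. exists c'. split; auto.
           ++ exfalso. apply Hn. intros y [A [CA Ay]].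
              apply NNPP; intro Hy. apply Hn2. exists A. split; [exact CA|]. intro Hs. apply Hy, Hs, Ay.
        -- intros y h. exists c. split; auto. apply (Ec x Mx Hxc Hncx); auto.
      * exfalso. apply Hn. intros y [A [CA Ay]].
        apply NNPP; intro Hy. apply Hall. exists A. split; [exact CA|].
        intro Hs. apply Hy. apply Hs. apply gsub. exact Ay.
Qed.

Lemma zorn {Y} (S : (Y->Prop)->Prop) (a0 : Y->Prop) :
  S a0 -> (forall C, (forall A, C A -> S A) -> chain C -> (exists A, C A) -> S (bigU C)) ->
  exists Mx, S Mx /\ forall B, S B -> sub Mx B -> sub B Mx.
Proof.
  intros Sa0 Sch. apply NNPP; intro Hno.
  assert (Hex : forall A, exists B, sub A B /\ (S A -> S B /\ ~ sub B A)).
  { intro A. destruct (classic (S A)) as [SA|nSA].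
    - apply NNPP; intro H. apply Hno. exists A. split; auto. intros B SB HAB.
      apply NNPP; intro HBA. apply H. exists B. auto.
    - exists A. split; [intros y h; exact h| intro; contradiction]. }
  set (g := fun A => proj1_sig (constructive_indefinite_description _ (Hex A))).
  assert (gsub : forall A, sub A (g A)) by
    (intro A; exact (proj1 (proj2_sig (constructive_indefinite_description _ (Hex A))))).
  assert (gS : forall A, S A -> S (g A) /\ ~ sub (g A) A) by
    (intro A; exact (proj2 (proj2_sig (constructive_indefinite_description _ (Hex A))))).
  assert (MS : forall A, Mset a0 g A -> S A).
  { apply M_ind. destruct (M_tower a0 g) as [T1 [T2 T3]]. split; [|split].
    - auto.
    - intros A [MA SA]. split; auto. apply gS; auto.
    - intros C HC Hch Hne. split. apply T3; auto. intros A HA; apply (HC A HA).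
      apply Sch; auto. intros A HA; apply (HC A HA). }
  destruct (M_tower a0 g) as [T1 [T2 T3]].
  assert (Mch : chain (Mset a0 g)).
  { intros A B MA MB. destruct (lemma1 a0 g gsub B MB (lemma2 a0 g gsub B MB) A MA) as [H|H]; auto.
    right. intros y h. apply H, gsub, h. }
  assert (Mu : Mset a0 g (bigU (Mset a0 g))) by (apply T3; eauto).
  apply (proj2 (gS _ (MS _ Mu))). intros y h. exists (g (bigU (Mset a0 g))). split; auto.
Qed.

Lemma open_union2 {Y} (T : topology Y) A B : is_topology T -> T A -> T B ->
  T (fun x => A x \/ B x).
Proof.
  intros [_ [_ Hu]] HA HB.
  apply (open_ext T (fun x => exists U, (U = A \/ U = B) /\ U x)).
  - apply Hu. intros U [->| ->]; auto.
  - intro y; split.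
    + intros [U [[->| ->] h]]; auto.
    + intros [h|h]; eauto.
Qed.

Lemma chain_max {Y} (C : (Y->Prop)->Prop) (l : list (Y->Prop)) A0 :
  C A0 -> chain C -> exists M, C M /\ forall O, In O l -> C O -> sub O M.
Proof.
  intros HA0 Hch. induction l as [|a l IH].
  - exists A0. split; auto. intros O [].
  - destruct IH as [M [CM HM]].
    destruct (classic (C a)) as [Ca|nCa].
    + destruct (Hch a M Ca CM) as [H|H].
      * exists M. split; auto. intros O [<-|HO] CO; auto.
      * exists a. split; auto. intros O [<-|HO] CO.
        -- intros y h; exact h.
        -- intros y h. apply H, (HM O HO CO), h.
    + exists M. split; auto. intros O [<-|HO] CO; [contradiction|auto].
Qed.

Lemma key (Y : Type) (TY : topology Y) (F : Y -> Prop) (G W : nat -> Y -> Prop) (U : Y -> Prop) :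
  is_topology TY -> locally_compact TY -> sober TY -> closed TY F ->
  (forall n, TY (G n)) -> (forall n, TY (W n)) ->
  (forall n O, TY O -> (exists y, O y /\ F y /\ forall k, G k y) ->
      exists y, O y /\ F y /\ (forall k, G k y) /\ W n y) ->
  TY U -> (exists y, U y /\ F y /\ forall k, G k y) ->
  exists y, U y /\ F y /\ (forall k, G k y) /\ (forall n, W n y).
Proof.
  intros Htop Hlc Hsob HF HG HW Hdens HU HUne.
  pose (B := fun y => F y /\ forall k, G k y).
  assert (step : forall n V, exists p : (Y->Prop)*(Y->Prop),
    (TY V /\ exists y, V y /\ B y) ->
    (TY (fst p) /\ (exists y, fst p y /\ B y) /\ compact TY (snd p) /\ saturated TY (snd p)
     /\ sub (fst p) (snd p) /\ sub (snd p) (fun y => V y /\ W n y /\ G n y))).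
  { intros n V. destruct (classic (TY V /\ exists y, V y /\ B y)) as [[HV Hne]|Hn];
      [| exists (V,V); intro; contradiction].
    destruct (Hdens n V HV Hne) as [y [Vy [Fy [Gy Wy]]]].
    assert (HO : TY (fun z => V z /\ W n z /\ G n z)).
    { destruct Htop as [_ [Hi _]]. apply Hi; auto. }
    destruct (Hlc y _ HO (conj Vy (conj Wy (Gy n)))) as [Q [Qc [Qs [[V' [HV' [V'y V'Q]]] QO]]]].
    exists (V', Q). intros _. simpl.
    split; [exact HV'|split; [exists y; split; [exact V'y| unfold B; split; auto]|
      split; [exact Qc|split; [exact Qs|split; [exact V'Q|exact QO]]]]]. }
  pose (s := fun n V => proj1_sig (constructive_indefinite_description _ (step n V))).
  assert (sP : forall n V, (TY V /\ exists y, V y /\ B y) ->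
    (TY (fst (s n V)) /\ (exists y, fst (s n V) y /\ B y) /\ compact TY (snd (s n V))
     /\ saturated TY (snd (s n V))
     /\ sub (fst (s n V)) (snd (s n V)) /\ sub (snd (s n V)) (fun y => V y /\ W n y /\ G n y))).
  { intros n V. exact (proj2_sig (constructive_indefinite_description _ (step n V))). }
  pose (Vs := nat_rect (fun _ => Y -> Prop) U (fun m Vm => fst (s m Vm))).
  assert (VsS : forall m, Vs (S m) = fst (s m (Vs m))) by reflexivity.
  assert (Vs0 : Vs 0 = U) by reflexivity.
  assert (Inv : forall n, TY (Vs n) /\ exists y, Vs n y /\ B y).
  { induction n.
    - rewrite Vs0. split; auto.
    - rewrite VsS. destruct (sP n (Vs n) IHn) as [h1 [h2 _]]. auto. }
  pose (Qs := fun n => snd (s n (Vs n))).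
  assert (QP : forall n, compact TY (Qs n) /\ saturated TY (Qs n) /\ sub (Vs (S n)) (Qs n)
     /\ sub (Qs n) (fun y => Vs n y /\ W n y /\ G n y)).
  { intro n. destruct (sP n (Vs n) (Inv n)) as [_ [_ [h3 [h4 [h5 h6]]]]].
    rewrite VsS. unfold Qs. auto. }
  assert (Qdec : forall n, sub (Qs (S n)) (Qs n)).
  { intros n y h. apply (proj1 (proj2 (proj2 (QP n)))).
    apply (proj2 (proj2 (proj2 (QP (S n))))) in h. apply h. }
  assert (Qmono : forall n m, n <= m -> sub (Qs m) (Qs n)).
  { intros n m Hle. induction Hle.
    - intros y h; exact h.
    - intros y h. apply IHHle, Qdec, h. }
  assert (Qne : forall n, exists y, Qs n y /\ F y).
  { intro n. destruct (proj2 (Inv (S n))) as [y [h [Fy _]]].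
    exists y. split; auto. apply (proj1 (proj2 (proj2 (QP n)))), h. }
  pose (Sf := fun O => TY O /\ forall n, exists y, Qs n y /\ F y /\ ~ O y).
  pose (a0 := fun y : Y => ~ F y).
  assert (Sa0 : Sf a0).
  { split; [exact HF|]. intro n. destruct (Qne n) as [y [h Fy]]. exists y.
    unfold a0. auto. }
  assert (Sch : forall C, (forall A, C A -> Sf A) -> chain C -> (exists A, C A) -> Sf (bigU C)).
  { intros C HC Hch [A0 CA0]. split.
    - destruct Htop as [_ [_ Hu]]. apply Hu. intros A HA; apply (HC A HA).
    - intro n. apply NNPP; intro Hn.
      destruct (proj1 (QP n) (fun O => C O \/ O = a0)) as [l [Hl Hcov]].
      + intros O [CO| ->]. apply (HC O CO). exact HF.
      + intros x Qx. destruct (classic (F x)) as [Fx|nFx].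
        * assert (bigU C x) as [A [CA Ax]].
          { apply NNPP; intro nb. apply Hn. exists x. auto. }
          exists A. auto.
        * exists a0. split; auto.
      + destruct (chain_max C l A0 CA0 Hch) as [Mx [CM HM]].
        destruct (proj2 (HC Mx CM) n) as [y [Qy [Fy nMy]]].
        destruct (Hcov y Qy) as [O [InO Oy]].
        destruct (Hl O InO) as [CO| ->].
        * apply nMy. apply (HM O InO CO), Oy.
        * apply Oy, Fy. }
  destruct (zorn Sf a0 Sa0 Sch) as [Os [[HOs SOs] Omax]].
  assert (Hcompl : sub a0 Os).
  { intros y h. apply (Omax (fun y => Os y \/ a0 y)).
    - split. apply open_union2; auto.
      intro n. destruct (SOs n) as [z [Qz [Fz nOz]]]. exists z. repeat split; auto.
      intros [H|H]; auto.
    - intros z hz; auto.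
    - auto. }
  pose (Z := fun y => ~ Os y).
  assert (HZ : irreducible_closed TY Z).
  { split; [|split].
    - unfold closed. apply (open_ext TY Os); auto. intro y. unfold Z. split; [auto|apply NNPP].
    - destruct (SOs 0) as [y [_ [_ h]]]. exists y. exact h.
    - intros F1 F2 HF1 HF2 Hcov.
      destruct (classic (forall x, Z x -> F1 x)) as [H1|H1]; [left; auto|].
      destruct (classic (forall x, Z x -> F2 x)) as [H2|H2]; [right; auto|].
      exfalso.
      assert (Hgen : forall F1, closed TY F1 -> ~ (forall x, Z x -> F1 x) ->
         exists n, forall y, Qs n y -> F y -> Os y \/ ~ F1 y).
      { intros F' HF' HnF'.
        assert (nS : ~ Sf (fun y => Os y \/ ~ F' y)).
        { intro HS. apply HnF'. intros x Zx. apply NNPP; intro nF.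
          apply Zx. apply (Omax _ HS); auto. intros y h; auto. }
        apply NNPP; intro Hne. apply nS. split. apply open_union2; auto.
        intro n. apply NNPP; intro Hn. apply Hne. exists n. intros y Qy Fy.
        apply NNPP; intro h. apply Hn. exists y. auto. }
      destruct (Hgen F1 HF1 H1) as [n1 Hn1].
      destruct (Hgen F2 HF2 H2) as [n2 Hn2].
      destruct (SOs (Nat.max n1 n2)) as [y [Qy [Fy nOy]]].
      destruct (Hn1 y (Qmono _ _ (Nat.le_max_l _ _) y Qy) Fy) as [h1|h1]; [auto|].
      destruct (Hn2 y (Qmono _ _ (Nat.le_max_r _ _) y Qy) Fy) as [h2|h2]; [auto|].
      destruct (Hcov y nOy); auto. }
  destruct (Hsob Z HZ) as [x [Hx _]].
  assert (Zx : Z x) by (apply (proj2 (Hx x)); intros V _ h; exact h).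
  assert (Fx : F x).
  { apply NNPP; intro nF. apply Zx. apply Hcompl. exact nF. }
  assert (Qx : forall n, Qs n x).
  { intro n. apply (proj1 (proj2 (QP n))). intros O HO HQO.
    apply NNPP; intro nOx.
    destruct (SOs n) as [y [Qy [Fy nOy]]].
    apply nOx. apply (proj1 (Hx y) nOy); auto. }
  exists x. split; [|split; [exact Fx|split]].
  - rewrite <- Vs0. apply (proj2 (proj2 (proj2 (QP 0))) x (Qx 0)).
  - intro k. apply (proj2 (proj2 (proj2 (QP k))) x (Qx k)).
  - intro k. apply (proj2 (proj2 (proj2 (QP k))) x (Qx k)).
Qed.

Lemma xlevel (X : Type) (T : topology X) : is_topology T -> LCS_complete T ->
  forall C, closed T C -> forall (Wx : nat -> X -> Prop), (forall n, T (Wx n)) ->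
  (forall n O, T O -> (exists x, O x /\ C x) -> exists x, O x /\ C x /\ Wx n x) ->
  forall O, T O -> (exists x, O x /\ C x) -> exists x, O x /\ C x /\ forall n, Wx n x.
Proof.
  intros HT [Y [TY [A [HtY [Hlc [Hsob [[G [HG HA]] [f [g [gf [fg [Hf Hg]]]]]]]]]]]].
  intros C HC Wx HWx Hdens O HO Hne.
  destruct (Hg _ HC) as [W0 [HW0 HW0e]].
  pose (F := fun y => ~ W0 y).
  assert (HF : closed TY F).
  { unfold closed. apply (open_ext TY W0); auto. intro y; unfold F; split; [auto|apply NNPP]. }
  assert (HFC : forall z : {y | A y}, F (proj1_sig z) <-> C (g z)).
  { intro z. unfold F. rewrite <- (HW0e z). split; [apply NNPP|auto]. }
  assert (HWex : forall n, exists W, TY W /\ forall z : {y | A y}, Wx n (g z) <-> W (proj1_sig z)).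
  { intro n. exact (Hg _ (HWx n)). }
  pose (WY := fun n => proj1_sig (constructive_indefinite_description _ (HWex n))).
  assert (HWY : forall n, TY (WY n) /\ forall z : {y | A y}, Wx n (g z) <-> WY n (proj1_sig z)).
  { intro n. exact (proj2_sig (constructive_indefinite_description _ (HWex n))). }
  destruct (Hg _ HO) as [OY [HOY HOYe]].
  assert (toZ : forall y, (forall k, G k y) -> A y) by (intros y h; apply HA; exact h).
  destruct (key Y TY F G WY OY HtY Hlc Hsob HF HG (fun n => proj1 (HWY n))) as [y [Oy [Fy [Gy Wy]]]].
  - intros n O' HO' [y [O'y [Fy Gy]]].
    pose (z := exist A y (toZ y Gy)).
    assert (HO'X : T (fun x => O' (proj1_sig (f x)))).
    { apply (Hf (fun z => O' (proj1_sig z))). exists O'. split; auto. intro; tauto. }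
    destruct (Hdens n _ HO'X) as [x [O'x [Cx Wxx]]].
    + exists (g z). rewrite fg. split; [exact O'y|]. apply (HFC z). exact Fy.
    + exists (proj1_sig (f x)). split; [exact O'x|]. split.
      * apply (HFC (f x)). rewrite gf. exact Cx.
      * split. apply HA. exact (proj2_sig (f x)).
        apply (proj2 (HWY n) (f x)). rewrite gf. exact Wxx.
  - exact HOY.
  - destruct Hne as [x [Ox Cx]]. exists (proj1_sig (f x)). split.
    + apply (HOYe (f x)). rewrite gf. exact Ox.
    + split. apply (HFC (f x)). rewrite gf. exact Cx.
      apply HA. exact (proj2_sig (f x)).
  - pose (z := exist A y (toZ y Gy)).
    exists (g z). split; [|split].
    + apply (HOYe z). exact Oy.
    + apply (HFC z). exact Fy.
    + intro n. apply (proj2 (HWY n) z). exact (Wy n).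
Qed.

Theorem corollary10p4 (X : Type) (T : topology X) :
  is_topology T -> LCS_complete T -> completely_Baire T /\ Baire T.
Proof.
  intros HT HL. split.
  - intros C HC U HU O' HO' [z0 Hz0].
    assert (HWex : forall n, exists W, T W /\ forall z : {x | C x}, U n z <-> W (proj1_sig z)).
    { intro n. exact (proj1 (HU n)). }
    pose (Wx := fun n => proj1_sig (constructive_indefinite_description _ (HWex n))).
    assert (HWx : forall n, T (Wx n) /\ forall z : {x | C x}, U n z <-> Wx n (proj1_sig z)).
    { intro n. exact (proj2_sig (constructive_indefinite_description _ (HWex n))). }
    destruct HO' as [O [HO HOe]].
    destruct (xlevel X T HT HL C HC Wx (fun n => proj1 (HWx n))) with (O := O)
      as [x [Ox [Cx Wxx]]].
    + intros n O1 HO1 [x [O1x Cx]].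
      destruct (proj2 (HU n) (fun z => O1 (proj1_sig z))) as [z [O1z Uz]].
      * exists O1. split; auto. intro; tauto.
      * exists (exist C x Cx). exact O1x.
      * exists (proj1_sig z). split; [exact O1z|]. split; [exact (proj2_sig z)|].
        apply (proj2 (HWx n) z). exact Uz.
    + exact HO.
    + exists (proj1_sig z0). split; [apply HOe; exact Hz0| exact (proj2_sig z0)].
    + exists (exist C x Cx). split.
      * apply HOe. exact Ox.
      * intro n. apply (proj2 (HWx n) (exist C x Cx)). exact (Wxx n).
  - intros U HU O HO Hne.
    assert (HC : closed T (fun _ : X => True)).
    { unfold closed. destruct HT as [_ [_ Hu]].
      apply (open_ext T (fun x => exists V, False /\ V x)).
      - apply Hu. intros V [].
      - intro y. split; [intros [V [[] _]]| intro h; exfalso; apply h; exact I]. }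
    destruct (xlevel X T HT HL _ HC U (fun n => proj1 (HU n))) with (O := O)
      as [x [Ox [_ Ux]]].
    + intros n O1 HO1 [x [O1x _]].
      destruct (proj2 (HU n) O1 HO1 (ex_intro _ x O1x)) as [y [h1 h2]].
      exists y. auto.
    + exact HO.
    + destruct Hne as [x Ox]. exists x. auto.
    + exists x. auto.
Qed.
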